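(* Let $f:\mathbb{R}^d\to\mathbb{R}$ be Lipschitz continuous and SISTr. For $\delta>0$ and $x\in\mathbb{R}^d$, let $\epsilon_{x,\delta}>0$ be the smallest number such that $$\min\{f(x+\epsilon_{x,\delta}\mathbf{1})-f(x),\ f(x)-f(x-\epsilon_{x,\delta}\mathbf{1})\}=\delta.$$ Then for every bounded set $D\subset\mathbb{R}^d$: - $\sup_{x\in D}\epsilon_{x,\delta}<\infty$ for every $\delta>0$; - $\sup_{x\in D}\epsilon_{x,\delta}\downarrow0$ as $\delta\downarrow0$.
   Context: $\mathbf{1}$ is the all-ones vector in $\mathbb{R}^d$. A function $g:\mathbb{R}^d\to\mathbb{R}$ is SISTr (strictly increasing under scalar translation) if, for every $x\in\mathbb{R}^d$, the map $c\in\mathbb{R}\mapsto g(x+c\mathbf{1})$ is strictly increasing and maps $\mathbb{R}$ onto $\mathbb{R}$. *)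

(* Defs.v *)
From HB Require Import structures.
From mathcomp Require Import all_boot all_order all_algebra.
From mathcomp Require Import all_classical all_reals all_analysis.
Set Implicit Arguments. Unset Strict Implicit. Unset Printing Implicit Defensive.
Import Order.TTheory GRing.Theory Num.Theory.
Import numFieldNormedType.Exports.
Local Open Scope classical_set_scope.
Local Open Scope ring_scope.

Definition ones (R : realType) (d : nat) : 'rV[R]_d := const_mx 1.

Definition SISTr (R : realType) (d : nat) (g : 'rV[R]_d -> R) : Prop :=
  forall x : 'rV[R]_d,
    (forall c1 c2 : R, c1 < c2 -> g (x + c1 *: ones R d) < g (x + c2 *: ones R d))
    /\ (forall y : R, exists c : R, g (x + c *: ones R d) = y).

Definition gap (R : realType) (d : nat) (f : 'rV[R]_d -> R) (x : 'rV[R]_d) (e : R) : R :=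
  Num.min (f (x + e *: ones R d) - f x) (f x - f (x - e *: ones R d)).

Definition is_eps (R : realType) (d : nat) (f : 'rV[R]_d -> R) (x : 'rV[R]_d)
  (delta e : R) : Prop :=
  0 < e /\ gap f x e = delta /\ (forall e', 0 < e' -> gap f x e' = delta -> e <= e').

(* Main.v *)
Require Import Defs.
From HB Require Import structures.
From mathcomp Require Import all_boot all_order all_algebra.
From mathcomp Require Import all_classical all_reals all_analysis.
From mathcomp Require Import lra.
Import Order.TTheory GRing.Theory Num.Theory.
Import numFieldNormedType.Exports.
Local Open Scope classical_set_scope.
Local Open Scope ring_scope.
Set Implicit Arguments. Unset Strict Implicit.

Lemma min_close (R : realType) (a b c e t : R) :
  `|a - c| <= t -> `|b - e| <= t -> `|Num.min a b - Num.min c e| <= t.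
Proof.
rewrite !ler_norml => /andP[h1 h2] /andP[h3 h4].
rewrite /Num.min; case: ifP => /= H1; case: ifP => /= H2;
 move: H1 H2; rewrite ?ltNge ?lt_neqAle => /=; lra.
Qed.

Lemma lip_cont (R : realType) d (g : 'rV[R]_d -> R) k :
  0 < k -> (forall x y, `|g x - g y| <= k * `|x - y|) -> continuous g.
Proof.
move=> k0 H x; apply/(@cvgrPdist_lt _ _ _ (nbhs x)) => e e0.
apply: (proj2 (@nbhs_normP R _ x _)); exists (e / k); first by [rewrite /= divr_gt0].
move=> y /= hy; apply: (le_lt_trans (H x y)).
by rewrite -ltr_pdivlMl // mulrC.
Qed.

Lemma lip_get (R : realType) d (f : 'rV[R]_d -> R) :
  [lipschitz f x | x in setT] ->
  exists2 k, 0 < k & forall x y, `|f x - f y| <= k * `|x - y|.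
Proof.
case=> M0 [M0r HM].
have lt : M0 < `|M0| + 1 by apply: (le_lt_trans (real_ler_norm M0r)); rewrite ltrDl.
exists (`|M0| + 1); first by rewrite ltr_wpDl.
by move=> x y; apply: (HM _ lt (x, y)).
Qed.
From mathcomp Require Import ring.

Section S.
Variables (R : realType) (d : nat) (f : 'rV[R]_d -> R).
Hypothesis HS : SISTr f.
Local Notation u := (ones R d).

Lemma f_le x c1 c2 : c1 <= c2 -> f (x + c1 *: u) <= f (x + c2 *: u).
Proof.
rewrite le_eqVlt => /orP[/eqP->//|h]; apply: ltW; exact: (proj1 (HS x)).
Qed.

Lemma f_lt x c1 c2 : c1 < c2 -> f (x + c1 *: u) < f (x + c2 *: u).
Proof. exact: (proj1 (HS x)). Qed.

Lemma gap_lt x e1 e2 : e1 < e2 -> gap f x e1 < gap f x e2.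
Proof.
move=> h; rewrite /gap.
have h1 := @f_lt x _ _ h.
have h2 : f (x - e2 *: u) < f (x - e1 *: u).
  by rewrite -!scaleNr; apply: f_lt; rewrite ltrN2.
rewrite lt_min !gt_min; apply/andP; split; apply/orP; [left|right]; lra.
Qed.

Lemma gap0 x : gap f x 0 = 0.
Proof. by rewrite /gap scale0r addr0 subr0 subrr /Num.min ltxx. Qed.

Lemma gap_pos x e : 0 < e -> 0 < gap f x e.
Proof. by move=> e0; rewrite -(gap0 x); apply: gap_lt. Qed.

Lemma gap_big x T : exists2 E, 0 < E & T <= gap f x E.
Proof.
have [c1 hc1] := proj2 (HS x) (f x + `|T| + 1).
have [c2 hc2] := proj2 (HS x) (f x - `|T| - 1).
have hT : T <= `|T| := ler_norm T.
have hT0 : 0 <= `|T| := normr_ge0 T.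
have c1p : 0 < c1.
  rewrite ltNge; apply/negP => h; have := @f_le x _ _ h.
  rewrite hc1 scale0r addr0; lra.
have c2n : c2 < 0.
  rewrite ltNge; apply/negP => h; have := @f_le x _ _ h.
  rewrite hc2 scale0r addr0; lra.
exists (Num.max c1 (- c2)); first by rewrite lt_max c1p.
rewrite /gap le_min; apply/andP; split.
  have := @f_le x _ _ (_ : c1 <= Num.max c1 (- c2)); last by rewrite le_max lexx; rewrite hc1; lra.
have : - Num.max c1 (- c2) <= c2 by rewrite lerNl le_max lexx orbT.
move/(@f_le x _ _); rewrite scaleNr hc2; lra.
Qed.

Lemma eps_le (eps : R) x delta E : 0 < delta -> is_eps f x delta eps ->
  0 < E -> delta <= gap f x E -> eps <= E.
Proof.
move=> d0 [e0 [ge _]] E0 h; rewrite leNgt; apply/negP => /(@gap_lt x _ _); lra.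
Qed.

Lemma eps_mono (e1 e2 : R) x d1 d2 : 0 < d1 -> d1 <= d2 ->
  is_eps f x d1 e1 -> is_eps f x d2 e2 -> e1 <= e2.
Proof.
move=> d10 d12 [e10 [g1 _]] [e20 [g2 _]]; rewrite leNgt; apply/negP => /(@gap_lt x _ _); lra.
Qed.

Variable k : R.
Hypothesis Hk : forall x y, `|f x - f y| <= k * `|x - y|.

Lemma gap_lip x y E : `|gap f x E - gap f y E| <= k * `|x - y| + k * `|x - y|.
Proof.
have L1 : forall c, `|f (x + c) - f (y + c)| <= k * `|x - y|.
  by move=> c; have := Hk (x + c) (y + c); rewrite opprD addrACA subrr addr0.
apply: min_close.
  have -> : f (x + E *: u) - f x - (f (y + E *: u) - f y) =
            (f (x + E *: u) - f (y + E *: u)) - (f x - f y) by ring.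
  by apply: le_trans (ler_normB _ _) _; apply: lerD.
have -> : f x - f (x - E *: u) - (f y - f (y - E *: u)) =
          (f x - f y) - (f (x - E *: u) - f (y - E *: u)) by ring.
by apply: le_trans (ler_normB _ _) _; apply: lerD.
Qed.

End S.

Unset Implicit Arguments. Set Strict Implicit.

Theorem lemma4p6 (R : realType) (d : nat) (f : 'rV[R]_d -> R)
  (eps : 'rV[R]_d -> R -> R) :
  [lipschitz f x | x in setT] ->
  SISTr f ->
  (forall x delta, 0 < delta -> is_eps f x delta (eps x delta)) ->
  forall D : set 'rV[R]_d, bounded_set D ->
    (forall delta, 0 < delta ->
       exists B : R, forall x, D x -> eps x delta <= B)
    /\ (forall delta1 delta2, 0 < delta1 -> delta1 <= delta2 ->
          sup [set eps x delta1 | x in D] <= sup [set eps x delta2 | x in D])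
    /\ (sup [set eps x delta | x in D] @[delta --> 0^'+] --> 0).
Proof.
move=> Hlip HS Heps D Dbd.
have [k k0 Hk] := lip_get Hlip.
have [r Hr] : exists r, forall x, D x -> `|x| <= r.
  case: Dbd => M [Mr HM]; exists (`|M| + 1) => x Dx; apply: (HM _ _ x Dx).
  by apply: (le_lt_trans (real_ler_norm Mr)); rewrite ltrDl.
have C1 : forall delta, 0 < delta -> exists B, forall x, D x -> eps x delta <= B.
  move=> delta d0.
  have [E E0 hE] := gap_big HS 0 (delta + (k * r + k * r)).
  exists E => x Dx; apply: (eps_le HS d0 (Heps x delta d0) E0).
  have := gap_lip Hk x 0 E; rewrite subr0 ler_norml => /andP[h1 h2].
  have : k * `|x| <= k * r by apply: ler_wpM2l; [exact: ltW | exact: Hr].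
  lra.
have UB : forall delta, 0 < delta -> has_ubound [set eps x delta | x in D].
  move=> delta d0; have [B hB] := C1 _ d0; exists B => y [x Dx <-]; exact: hB.
split; first exact: C1.
split.
  move=> d1 d2 d10 d12.
  have d20 : 0 < d2 by apply: lt_le_trans d12.
  case: (pselect (exists x, D x)) => [[x0 Dx0]|D0].
    apply: ge_sup; first by exists (eps x0 d1), x0.
    move=> y [x Dx <-]; apply: le_trans (ub_le_sup (UB _ d20) _); last by exists x.
    exact: (eps_mono HS d10 d12 (Heps x d1 d10) (Heps x d2 d20)).
  have E : forall dd, [set eps x dd | x in D] = set0.
    by move=> dd; apply/seteqP; split=> y // [x Dx _]; apply: D0; exists x.
  by rewrite !E.
apply/cvgrPdist_le => e e0.
case: (pselect (exists x, D x)) => [[x0 Dx0]|D0]; last first.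
  have E : forall dd, [set eps x dd | x in D] = set0.
    by move=> dd; apply/seteqP; split=> y // [x Dx _]; apply: D0; exists x.
  by apply: nearW => t; rewrite E sup0 subrr normr0 ltW.
pose r' := `|r| + 1.
have r'0 : 0 < r' by rewrite /r' ltr_wpDl.
pose A := closed_ball (0 : 'rV[R]_d) r'.
have inA : forall t, A t <-> `|t| <= r'.
  by move=> t; rewrite /A closed_ballE // /closed_ball_ /= sub0r normrN.
have DA : forall x, D x -> A x.
  move=> x Dx; apply/inA; apply: (le_trans (Hr x Dx)).
  by apply: (le_trans (ler_norm r)); rewrite /r' lerDl.
have Acomp : compact A.
  apply: bounded_closed_compact; last exact: closed_ball_closed.
  exists r'; split; first exact: gtr0_real.
  move=> M hM t /inA h; apply: le_trans h _; exact: ltW.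
have hcont : continuous (fun x => gap f x e).
  apply: (@lip_cont _ _ _ (k + k)); first by rewrite addr_gt0.
  by move=> x y; rewrite mulrDl; apply: gap_lip.
have A0 : A 0 by apply/inA; rewrite normr0 ltW.
have hw : {within A, continuous (fun x => gap f x e)}.
  by apply: continuous_subspaceT.
have [c cA cmin] := EVT_min_rV (f := fun x => gap f x e)
  (ex_intro _ 0 A0) Acomp hw.
pose m := gap f c e.
have m0 : 0 < m by apply: gap_pos.
near=> t.
have t0 : 0 < t by near: t; exact: nbhs_right_gt.
have tm : t < m by near: t; exact: nbhs_right_lt.
have s0 : 0 <= sup [set eps x t | x in D].
  apply: le_trans (ub_le_sup (UB _ t0) _); last by exists x0.
  exact: ltW (proj1 (Heps x0 t t0)).
rewrite sub0r normrN ger0_norm //.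
apply: ge_sup; first by exists (eps x0 t), x0.
move=> y [x Dx <-]; apply: (eps_le HS t0 (Heps x t t0) e0).
apply: ltW; apply: lt_le_trans tm _; apply: cmin.
by rewrite inE; apply: DA.
Unshelve. all: by end_near.
Qed.
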